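(* Consider the following procedure (MPO). Let $\pi^1$ be a reference policy with $\pi^1_h(a|s)\ge\underline{\pi}>0$ for all $h,s,a$, let $T\ge1$ and $\beta=\sqrt{\frac{\log\underline{\pi}^{-1}}{TH^2}}$, and for $t=1,\dots,T$ define $$\pi^{t+1}_h(a|s)\ \propto\ \pi^t_h(a|s)\exp\Big[\beta\,\mathbb{E}_{(S',A')\sim d^{\pi^t}_h(\cdot|s_1(s))}Q^{\pi^t,\pi^t}_h(s,a,S',A')\Big].$$ Then there exists a policy $\bar\pi^T$ such that $d^{\bar\pi^T}_h=\frac1T\sum_{t=1}^Td^{\pi^t}_h$ for all $h\in[H]$, and for $T=\frac{16H^4\log\underline{\pi}^{-1}}{\epsilon^2}$ the pair $(\bar\pi^T,\bar\pi^T)$ is an $\epsilon$-approximate Nash equilibrium. Hence this procedure outputs an $\epsilon$-approximate Nash equilibrium after $\frac{16H^4\log\underline{\pi}^{-1}}{\epsilon^2}$ policy updates.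
   Context: Finite-horizon MDP: state space $\mathcal{S}$, action space $\mathcal{A}$, horizon $H$, transition kernel $f$, initial distribution $\nu_1$. Each state $s$ is reachable from a unique initial state, denoted $s_1(s)$. Policies are non-stationary, $\pi=(\pi_h)_{h=1}^H$, $\Pi$ is the set of policies. Pairwise reward $r(s,a,s',a')=\mathbb{P}([s,a]\succ[s',a'])\in[0,1]$ with $r(s,a,s',a')=1-r(s',a',s,a)$. For policies $\pi,\pi'$, trajectories are generated independently from a common initial state $S_1=S'_1\sim\nu_1$: $A_\tau\sim\pi_\tau(\cdot|S_\tau)$, $S_{\tau+1}\sim f(\cdot|S_\tau,A_\tau)$, and similarly for $(S',A')$ under $\pi'$. Define $Q^{\pi,\pi'}_h(s,a,s',a')=\mathbb{E}\big[\sum_{\tau=h}^Hr(S_\tau,A_\tau,S'_\tau,A'_\tau)\mid S_h=s,S'_h=s',A_h=a,A'_h=a'\big]$, $V^{\pi,\pi'}(s,s')=\mathbb{E}\big[\sum_{\tau=1}^Hr(S_\tau,A_\tau,S'_\tau,A'_\tau)\mid S_1=s,S'_1=s'\big]$, and $\langle\nu_1,V^{\pi,\pi'}\rangle=\mathbb{E}_{S_1\sim\nu_1}V^{\pi,\pi'}(S_1,S_1)$. Occupancy measures: $d^\pi_h(s,a)=\Pr(S_h=s,A_h=a)$ and $d^\pi_h(s,a|s_1)=\Pr(S_h=s,A_h=a\mid S_1=s_1)$. A pair $(\pi,\pi)$ is an $\epsilon$-approximate Nash equilibrium if $\langle\nu_1,V^{\pi,\pi}\rangle-\min_{\bar\pi\in\Pi}\langle\nu_1,V^{\pi,\bar\pi}\rangle\le\epsilon$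 and $\max_{\bar\pi\in\Pi}\langle\nu_1,V^{\bar\pi,\pi}\rangle-\langle\nu_1,V^{\pi,\pi}\rangle\le\epsilon$. *)

(* Defs.v *)
From mathcomp Require Import all_boot all_order all_algebra.
From mathcomp Require Import reals.
From mathcomp.analysis Require Import sequences exp.
Set Implicit Arguments. Unset Strict Implicit. Unset Printing Implicit Defensive.
Import Order.TTheory GRing.Theory Num.Theory.
Local Open Scope ring_scope.

Section MDP.
Variables (R : realType) (S A : finType) (H : nat).
Variables (f : S -> A -> S -> R)   (* f s a s' = P(S_{h+1} = s' | S_h = s, A_h = a) *)
          (nu1 : S -> R)
          (r : S -> A -> S -> A -> R).

Definition is_mdp : Prop :=
  [/\ (forall s a s', 0 <= f s a s'),
      (forall s a, \sum_s' f s a s' = 1),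
      (forall s, 0 <= nu1 s),
      \sum_s nu1 s = 1 &
      forall s a s' a', 0 <= r s a s' a' <= 1 /\ r s a s' a' = 1 - r s' a' s a].

(* non-stationary policy: pi h s a = pi_h(a|s); only h in [1, H] is used *)
Definition policy := nat -> S -> A -> R.

Definition is_policy (pi : policy) : Prop :=
  forall h, (1 <= h <= H)%N -> forall s,
    (forall a, 0 <= pi h s a) /\ \sum_a pi h s a = 1.

(* sdist pi s1 n s = Pr(S_{n+1} = s | S_1 = s1) under pi *)
Fixpoint sdist (pi : policy) (s1 : S) (n : nat) (s' : S) : R :=
  match n with
  | 0 => (s' == s1)%:R
  | n'.+1 => \sum_s \sum_a sdist pi s1 n' s * pi n s a * f s a s'
  end.

Definition occ_cond (pi : policy) (h : nat) (s1 s : S) (a : A) : R :=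
  sdist pi s1 h.-1 s * pi h s a.

Definition occ (pi : policy) (h : nat) (s : S) (a : A) : R :=
  \sum_s1 nu1 s1 * occ_cond pi h s1 s a.

(* Qrem pi pi' n h = expected sum of the n rewards at steps h, ..., h+n-1,
   the two trajectories evolving independently *)
Fixpoint Qrem (pi pi' : policy) (n h : nat) (s : S) (a : A) (s' : S) (a' : A) : R :=
  match n with
  | 0 => 0
  | n'.+1 => r s a s' a' +
      \sum_x \sum_x' f s a x * f s' a' x' *
        \sum_b \sum_b' pi h.+1 x b * pi' h.+1 x' b' * Qrem pi pi' n' h.+1 x b x' b'
  end.

Definition Qf (pi pi' : policy) (h : nat) : S -> A -> S -> A -> R :=
  Qrem pi pi' (H.+1 - h) h.

Definition Vf (pi pi' : policy) (s s' : S) : R :=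
  \sum_a \sum_a' pi 1%N s a * pi' 1%N s' a' * Qf pi pi' 1 s a s' a'.

Definition nuV (pi pi' : policy) : R := \sum_s nu1 s * Vf pi pi' s s.

Definition is_approx_NE (eps : R) (pi : policy) : Prop :=
  (forall pib, is_policy pib -> nuV pi pi - nuV pi pib <= eps) /\
  (forall pib, is_policy pib -> nuV pib pi - nuV pi pi <= eps).

Definition reachable (s0 s : S) : Prop :=
  exists pi, is_policy pi /\
    exists h, (1 <= h <= H)%N /\ exists a, 0 < occ_cond pi h s0 s a.

Definition unique_initial (s1of : S -> S) : Prop :=
  forall s, 0 < nu1 (s1of s) /\
    (forall s0, 0 < nu1 s0 -> reachable s0 s -> s0 = s1of s).

Definition mpo_gain (s1of : S -> S) (pi : policy) (h : nat) (s : S) (a : A) : R :=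
  \sum_s' \sum_a' occ_cond pi h (s1of s) s' a' * Qf pi pi h s a s' a'.

Definition mpo_step (s1of : S -> S) (beta : R) (pi : policy) : policy :=
  fun h s a =>
    pi h s a * expR (beta * mpo_gain s1of pi h s a) /
    \sum_b pi h s b * expR (beta * mpo_gain s1of pi h s b).

(* mpo s1of beta pi1 n = pi^{n+1} *)
Fixpoint mpo (s1of : S -> S) (beta : R) (pi1 : policy) (n : nat) : policy :=
  match n with
  | 0 => pi1
  | n'.+1 => mpo_step s1of beta (mpo s1of beta pi1 n')
  end.

End MDP.

(* Main.v *)
Require Import Defs.
From mathcomp Require Import all_boot all_order all_algebra.
From mathcomp Require Import reals.
From mathcomp.analysis Require Import sequences exp.
From mathcomp Require Import lra ring zify.
Import Order.TTheory GRing.Theory Num.Theory.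
Local Open Scope ring_scope.

Section Aux.
Variable R : realType.

Lemma sum_ind (T : finType) (s1 : T) (F : T -> R) :
  \sum_s ((s == s1)%:R * F s) = F s1.
Proof.
rewrite (bigD1 s1) //= eqxx mul1r big1 ?addr0 // => s /negbTE ->.
by rewrite mul0r.
Qed.

Lemma avg2 (I J : finType) (u : I -> R) (v : J -> R) (X : I -> J -> R) (c : R) :
  (forall i, 0 <= u i) -> (forall j, 0 <= v j) -> \sum_i u i = 1 -> \sum_j v j = 1 ->
  (forall i j, 0 <= X i j <= c) ->
  0 <= \sum_i \sum_j u i * v j * X i j <= c.
Proof.
move=> u0 v0 su sv HX; apply/andP; split.
  apply: sumr_ge0 => i _; apply: sumr_ge0 => j _.
  by rewrite !mulr_ge0 //; case/andP: (HX i j).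
apply: (@le_trans _ _ (\sum_i \sum_j u i * v j * c)).
  apply: ler_sum => i _; apply: ler_sum => j _.
  by rewrite ler_wpM2l ?mulr_ge0 //; case/andP: (HX i j).
have -> : \sum_i \sum_j u i * v j * c = c; last by [].
under eq_bigr do rewrite -mulr_suml -mulr_sumr sv mulr1.
by rewrite -mulr_suml su mul1r.
Qed.

Lemma avgw (I J : finType) (u : I -> J -> R) (X : I -> J -> R) (c : R) :
  (forall i j, 0 <= u i j) -> \sum_i \sum_j u i j = 1 ->
  (forall i j, 0 <= X i j <= c) ->
  0 <= \sum_i \sum_j u i j * X i j <= c.
Proof.
move=> u0 su HX; apply/andP; split.
  apply: sumr_ge0 => i _; apply: sumr_ge0 => j _.
  by rewrite !mulr_ge0 //; case/andP: (HX i j).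
apply: (@le_trans _ _ (\sum_i \sum_j u i j * c)).
  apply: ler_sum => i _; apply: ler_sum => j _.
  by rewrite ler_wpM2l //; case/andP: (HX i j).
by under eq_bigr do rewrite -mulr_suml; rewrite -mulr_suml su mul1r.
Qed.

Lemma expR_quad (x : R) : 0 <= x -> x <= 1/2 -> expR x <= 1 + x + 2 * x ^+ 2.
Proof.
move=> x0 x1.
have h1 : 1 - x <= expR (- x) by have := expR_ge1Dx (- x).
have hp : 0 < 1 - x by lra.
rewrite expRN in h1.
have e0 := expR_gt0 x.
have : expR x * (1 - x) <= 1.
  have := ler_wpM2l (ltW e0) h1; rewrite mulfV //; exact: lt0r_neq0.
move=> h2.
have h3 : 1 <= (1 + x + 2 * x ^+ 2) * (1 - x) by nra.
have h4 : expR x * (1 - x) <= (1 + x + 2 * x ^+ 2) * (1 - x) by lra.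
by rewrite ler_pM2r in h4.
Qed.

Lemma ex2 (X I J : finType) (F : X -> I -> J -> R) :
  \sum_x \sum_i \sum_j F x i j = \sum_i \sum_j \sum_x F x i j.
Proof. rewrite exchange_big; apply: eq_bigr => i _; exact: exchange_big. Qed.
Lemma ex4 (X I J K L : finType) (F : X -> I -> J -> K -> L -> R) :
  \sum_x \sum_i \sum_j \sum_k \sum_l F x i j k l = \sum_i \sum_j \sum_k \sum_l \sum_x F x i j k l.
Proof. rewrite ex2; apply: eq_bigr => i _; apply: eq_bigr => j _; exact: ex2. Qed.

Lemma swap_lemma (I J K L M N : finType) (P : I -> J -> R) (Q : K -> L -> R) (F : I -> J -> M -> R) (G : K -> L -> N -> R) (W : M -> N -> R) :
 \sum_i \sum_j P i j * (\sum_k \sum_l Q k l * \sum_x \sum_y F i j x * G k l y * W x y)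
 = \sum_x \sum_y (\sum_i \sum_j P i j * F i j x) * (\sum_k \sum_l Q k l * G k l y) * W x y.
Proof.
transitivity (\sum_i \sum_j \sum_k \sum_l \sum_x \sum_y P i j * Q k l * F i j x * G k l y * W x y).
  apply: eq_bigr => i _; apply: eq_bigr => j _; rewrite mulr_sumr; apply: eq_bigr => k _.
  rewrite mulr_sumr; apply: eq_bigr => l _; rewrite mulrA mulr_sumr; apply: eq_bigr => x _.
  rewrite mulr_sumr; apply: eq_bigr => y _; by rewrite !mulrA.
symmetry.
transitivity (\sum_x \sum_y \sum_i \sum_j \sum_k \sum_l P i j * Q k l * F i j x * G k l y * W x y).
  apply: eq_bigr => x _; apply: eq_bigr => y _; rewrite mulr_suml mulr_suml; apply: eq_bigr => i _.
  rewrite mulr_suml mulr_suml; apply: eq_bigr => j _; rewrite mulr_sumr mulr_suml; apply: eq_bigr => k _.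
  rewrite mulr_sumr mulr_suml; apply: eq_bigr => l _.
  by rewrite -!mulrA; congr (_ * _); rewrite mulrCA; congr (_ * _); rewrite mulrCA.
apply: etrans; [apply: eq_bigr => x _; exact: ex4 | exact: ex4].
Qed.

Lemma sum4_swap (I J K L : finType) (u : I -> J -> R) (v : K -> L -> R) (X : I -> J -> K -> L -> R) :
  \sum_i \sum_j u i j * (\sum_k \sum_l v k l * X i j k l) =
  \sum_k \sum_l v k l * (\sum_i \sum_j u i j * X i j k l).
Proof.
transitivity (\sum_i \sum_j \sum_k \sum_l u i j * (v k l * X i j k l)).
  apply: eq_bigr => i _; apply: eq_bigr => j _; rewrite mulr_sumr; apply: eq_bigr => k _.
  by rewrite mulr_sumr.
under eq_bigr => i _ do rewrite ex2.
rewrite ex2; apply: eq_bigr => k _; apply: eq_bigr => l _; rewrite mulr_sumr.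
apply: eq_bigr => i _; rewrite mulr_sumr; apply: eq_bigr => j _; by rewrite mulrCA.
Qed.

Lemma lin3 (M I J : finType) (u : I -> R) (v : I -> J -> R) (X : M -> I -> J -> R) :
  \sum_m \sum_i u i * (\sum_j v i j * X m i j) = \sum_i u i * (\sum_j v i j * \sum_m X m i j).
Proof.
rewrite exchange_big; apply: eq_bigr => i _; rewrite -mulr_sumr; congr (_ * _).
rewrite exchange_big; apply: eq_bigr => j _; by rewrite -mulr_sumr.
Qed.

Lemma lin4 (I J K L M : finType) (O : I -> J -> R) (c : R) (P : M -> K -> L -> R)
  (X : I -> J -> K -> L -> R) :
  \sum_i \sum_j O i j * (\sum_k \sum_l (c * \sum_m P m k l) * X i j k l) =
  c * \sum_m \sum_i \sum_j O i j * (\sum_k \sum_l P m k l * X i j k l).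
Proof.
transitivity (\sum_i \sum_j \sum_k \sum_l \sum_m c * (O i j * (P m k l * X i j k l))).
  apply: eq_bigr => i _; apply: eq_bigr => j _; rewrite mulr_sumr; apply: eq_bigr => k _.
  rewrite mulr_sumr; apply: eq_bigr => l _; rewrite mulr_sumr mulr_suml mulr_sumr.
  apply: eq_bigr => m _; ring.
symmetry; rewrite mulr_sumr.
transitivity (\sum_m \sum_i \sum_j \sum_k \sum_l c * (O i j * (P m k l * X i j k l))).
  apply: eq_bigr => m _; rewrite mulr_sumr; apply: eq_bigr => i _.
  rewrite mulr_sumr; apply: eq_bigr => j _; rewrite !mulr_sumr; apply: eq_bigr => k _.
  rewrite !mulr_sumr; apply: eq_bigr => l _; done.
exact: ex4.
Qed.

End Aux.

Section MW.
Variable R : realType.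

Lemma mw_regret (A : finType) (w g : nat -> A -> R) (q : A -> R) (beta pimin Gm : R) (T : nat) :
  0 < beta -> 0 < pimin -> 0 <= Gm -> beta * Gm <= 1/2 ->
  (forall a, pimin <= w 0%N a) -> \sum_a w 0%N a = 1 ->
  (forall t a, 0 <= g t a <= Gm) ->
  (forall t a, w t.+1 a = w t a * expR (beta * g t a) / \sum_b w t b * expR (beta * g t b)) ->
  (forall a, 0 <= q a) -> \sum_a q a = 1 ->
  \sum_(t < T) \sum_a (q a - w t a) * g t a <=
     ln (pimin^-1) / beta + 2 * beta * T%:R * Gm ^+ 2.
Proof.
move=> b0 p0 G0 bG w0 ws0 gb wup q0 qs.
pose Z t := \sum_b w t b * expR (beta * g t b).
have Z1 : forall t, \sum_a w t a = 1 -> (forall a, 0 < w t a) -> 1 <= Z t.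
  move=> t ws wp; rewrite -ws; apply: ler_sum => b _; rewrite ler_peMr ?(ltW (wp b)) //.
  apply: le_trans (expR_ge1Dx _); rewrite lerDl mulr_ge0 ?(ltW b0) //.
  by case/andP: (gb t b).
have pos : forall t, (forall a, 0 < w t a) /\ \sum_a w t a = 1.
  elim=> [|t [wp ws]]; first by split => // a; apply: lt_le_trans p0 (w0 a).
  have Zp : 0 < Z t by apply: lt_le_trans (Z1 t ws wp).
  split => [a|].
    by rewrite wup divr_gt0 // mulr_gt0 // expR_gt0.
  under eq_bigr do rewrite wup.
  by rewrite -mulr_suml -/(Z t) divff // gt_eqF.
pose Psi t := \sum_a q a * ln (w t a).
pose c := 2 * beta ^+ 2 * Gm ^+ 2.
have step : forall t, beta * \sum_a (q a - w t a) * g t a <= Psi t.+1 - Psi t + c.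
  move=> t; have [wp ws] := pos t.
  have Zp : 0 < Z t by apply: lt_le_trans (Z1 t ws wp).
  have eP : Psi t.+1 - Psi t = beta * \sum_a q a * g t a - ln (Z t).
    rewrite /Psi -sumrB.
    transitivity (\sum_a q a * (beta * g t a - ln (Z t))).
      apply: eq_bigr => a _; rewrite -mulrBr; congr (_ * _).
      rewrite wup ln_div ?posrE ?mulr_gt0 ?expR_gt0 // lnM ?posrE ?expR_gt0 // expRK.
      ring.
    under eq_bigr do rewrite mulrBr.
    rewrite sumrB -mulr_suml qs mul1r mulr_sumr; congr (_ - _).
    by apply: eq_bigr => a _; rewrite mulrCA.
  have lnZ : ln (Z t) <= Z t - 1.
    have e : 1 + (Z t - 1) = Z t by ring.
    have := @le_ln1Dx R (Z t - 1); rewrite e; apply; lra.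
  have Zb : Z t <= 1 + beta * \sum_a w t a * g t a + c.
    apply: (@le_trans _ _ (\sum_a w t a * (1 + beta * g t a + c))).
      apply: ler_sum => a _; rewrite ler_wpM2l ?(ltW (wp a)) //.
      case/andP: (gb t a) => g0 g1.
      have x0 : 0 <= beta * g t a by rewrite mulr_ge0 ?(ltW b0).
      have x1 : beta * g t a <= beta * Gm by rewrite ler_wpM2l ?(ltW b0).
      apply: le_trans (@expR_quad R _ x0 _) _; first lra.
      rewrite /c lerD2l -mulrA ler_wpM2l // -exprMn lerXn2r ?nnegrE //; lra.
    under eq_bigr do rewrite !mulrDr mulr1.
    rewrite !big_split /= ws -mulr_suml ws mul1r mulr_sumr lerD2r lerD2l.
    by under [X in _ <= X]eq_bigr do rewrite mulrCA.
  rewrite mulr_sumr.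
  under eq_bigr do rewrite mulrBl mulrBr.
  rewrite sumrB -!mulr_sumr; lra.
have ssum : beta * \sum_(t < T) \sum_a (q a - w t a) * g t a <= Psi T - Psi 0%N + c *+ T.
  rewrite mulr_sumr -(big_mkord xpredT (fun t => beta * \sum_a (q a - w t a) * g t a)).
  apply: le_trans (ler_sum _ (fun t _ => step t)) _.
  by rewrite big_split /= telescope_sumr // sumr_const_nat subn0.
have PsiT : Psi T <= 0.
  have [wp ws] := pos T.
  apply: sumr_le0 => a _; rewrite mulr_ge0_le0 // ln_le0 // -ws (bigD1 a) //= lerDl.
  by apply: sumr_ge0 => b _; apply: ltW.
have Psi0 : ln pimin <= Psi 0%N.
  have [wp ws] := pos 0%N.
  rewrite -[ln pimin]mul1r -qs mulr_suml; apply: ler_sum => a _.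
  by rewrite ler_wpM2l // ler_ln ?posrE.
have LL : ln (pimin^-1) = - ln pimin by rewrite lnV ?posrE.
rewrite -(ler_pM2l b0) mulrDr.
have e : beta * (ln (pimin^-1) / beta) = ln (pimin^-1) by rewrite mulrC divfK // gt_eqF.
rewrite e.
have e2 : beta * (2 * beta * T%:R * Gm ^+ 2) = c *+ T by rewrite /c -mulr_natr; ring.
rewrite e2 LL; lra.
Qed.
End MW.

Section MDPsec.
Variables (R : realType) (S A : finType) (H : nat) (f : S -> A -> S -> R)
  (nu1 : S -> R) (r : S -> A -> S -> A -> R).
Hypothesis Hmdp : is_mdp f nu1 r.

Lemma f_ge0 s a x : 0 <= f s a x. Proof. by case: Hmdp. Qed.
Lemma f_sum s a : \sum_x f s a x = 1. Proof. by case: Hmdp. Qed.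
Lemma nu_ge0 s : 0 <= nu1 s. Proof. by case: Hmdp. Qed.
Lemma nu_sum : \sum_s nu1 s = 1. Proof. by case: Hmdp. Qed.
Lemma r_bnd s a s' a' : 0 <= r s a s' a' <= 1.
Proof. by case: Hmdp => _ _ _ _ /(_ s a s' a') []. Qed.
Lemma r_anti s a s' a' : r s a s' a' + r s' a' s a = 1.
Proof. by case: Hmdp => _ _ _ _ /(_ s a s' a') [] _ ->; rewrite subrK. Qed.

Lemma pol_ge0 (p : policy R S A) h s a : is_policy H p -> (0 < h)%N -> (h <= H)%N -> 0 <= p h s a.
Proof. by move=> Hp h0 hH; case: (Hp h _ s) => //; rewrite h0 hH. Qed.
Lemma pol_sum (p : policy R S A) h s : is_policy H p -> (0 < h)%N -> (h <= H)%N -> \sum_a p h s a = 1.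
Proof. by move=> Hp h0 hH; case: (Hp h _ s) => //; rewrite h0 hH. Qed.

Lemma sdist_ge0 p s1 n s : is_policy H p -> (n <= H)%N -> 0 <= sdist f p s1 n s.
Proof.
move=> Hp; elim: n s => [|n IH] s Hn /=; first by rewrite ler0n.
apply: sumr_ge0 => x _; apply: sumr_ge0 => a _.
by rewrite !mulr_ge0 ?f_ge0 ?IH ?(ltnW Hn) ?(pol_ge0 _ _ _ _ Hp).
Qed.

Lemma sdist_sum p s1 n : is_policy H p -> (n <= H)%N -> \sum_s sdist f p s1 n s = 1.
Proof.
move=> Hp; elim: n => [|n IH] Hn /=.
  by rewrite (bigD1 s1) //= eqxx big1 ?addr0 // => s /negbTE ->.
rewrite exchange_big /=.
rewrite -(IH (ltnW Hn)); apply: eq_bigr => s _.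
rewrite exchange_big /=.
under eq_bigr do rewrite -mulr_sumr f_sum mulr1.
by rewrite -mulr_sumr (pol_sum _ _ _ Hp) ?mulr1.
Qed.

Lemma occc_ge0 p h s1 s a : is_policy H p -> (0 < h)%N -> (h <= H)%N -> 0 <= occ_cond f p h s1 s a.
Proof.
move=> Hp h0 hH; rewrite /occ_cond mulr_ge0 ?(pol_ge0 _ _ _ _ Hp) ?sdist_ge0 //.
by apply: leq_trans (leq_pred _) hH.
Qed.

Lemma occc_sum p h s1 : is_policy H p -> (0 < h)%N -> (h <= H)%N ->
  \sum_s \sum_a occ_cond f p h s1 s a = 1.
Proof.
move=> Hp h0 hH; rewrite /occ_cond.
under eq_bigr do rewrite -mulr_sumr (pol_sum _ _ _ Hp) // mulr1.
by rewrite sdist_sum // (leq_trans (leq_pred _) hH).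
Qed.

Lemma Qrem_bnd p q n h s a s' a' : is_policy H p -> is_policy H q ->
  (h + n <= H.+1)%N -> 0 <= Qrem f r p q n h s a s' a' <= n%:R.
Proof.
move=> Hp Hq; elim: n h s a s' a' => [|n IH] h s a s' a' Hn /=; first by rewrite lexx.
case: n IH Hn => [|n] IH Hn.
  have -> : \sum_x \sum_x' f s a x * f s' a' x' *
     \sum_b \sum_b' p h.+1 x b * q h.+1 x' b' * Qrem f r p q 0 h.+1 x b x' b' = 0.
    apply: big1 => x _; apply: big1 => x' _; rewrite big1 ?mulr0 // => b _.
    by apply: big1 => b' _; rewrite mulr0.
  by rewrite addr0 r_bnd.
have hH : (h.+1 <= H)%N by lia.
have := @avg2 R S S (f s a) (f s' a') (fun x x' => \sum_b \sum_b' p h.+1 x b * q h.+1 x' b' * Qrem f r p q n.+1 h.+1 x b x' b') (n.+1)%:R (f_ge0 s a) (f_ge0 s' a') (f_sum s a) (f_sum s' a').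
case/(_ _)/andP.
  move=> x x'; apply: avg2.
  - by move=> b; apply: (pol_ge0 _ _ _ _ Hp).
  - by move=> b; apply: (pol_ge0 _ _ _ _ Hq).
  - exact: (pol_sum _ _ _ Hp).
  - exact: (pol_sum _ _ _ Hq).
  move=> b b'; apply: IH; lia.
move=> i0 i1; case/andP: (r_bnd s a s' a') => r0 r1.
rewrite -natr1; apply/andP; split; lra.
Qed.

Lemma Qf_rec p q h s a s' a' : (h <= H)%N ->
  Qf H f r p q h s a s' a' = r s a s' a' + \sum_x \sum_x' f s a x * f s' a' x' *
     \sum_b \sum_b' p h.+1 x b * q h.+1 x' b' * Qf H f r p q h.+1 x b x' b'.
Proof. by move=> hH; rewrite /Qf subSS subSn. Qed.

Lemma Qf_end p q s a s' a' : Qf H f r p q H.+1 s a s' a' = 0.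
Proof. by rewrite /Qf subnn. Qed.

Lemma Qf_bnd p q h s a s' a' : is_policy H p -> is_policy H q -> (0 < h)%N -> (h <= H)%N ->
  0 <= Qf H f r p q h s a s' a' <= H%:R.
Proof.
move=> Hp Hq h0 hH; have hl : (h + (H.+1 - h) <= H.+1)%N by lia.
case/andP: (Qrem_bnd p q (H.+1 - h) h s a s' a' Hp Hq hl).
move=> -> /le_trans; apply; rewrite ler_nat; lia.
Qed.

Definition Gq (pi q : policy R S A) h s1 s a :=
  \sum_s' \sum_a' occ_cond f q h s1 s' a' * Qf H f r pi q h s a s' a'.
Definition Aterm (p w pi q : policy R S A) h :=
  \sum_s1 nu1 s1 * \sum_s \sum_a sdist f p s1 h.-1 s * w h s a * Gq pi q h s1 s a.
Definition Rw (p q : policy R S A) h :=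
  \sum_s1 nu1 s1 * \sum_s \sum_a occ_cond f p h s1 s a *
     \sum_s' \sum_a' occ_cond f q h s1 s' a' * r s a s' a'.

Lemma Aterm_step p pi q h : (0 < h)%N -> (h <= H)%N ->
  Aterm p p pi q h = Rw p q h + Aterm p pi pi q h.+1.
Proof.
case: h => // h _ hH.
rewrite /Aterm /Rw -big_split /=; apply: eq_bigr => s1 _; rewrite -mulrDr; congr (_ * _).
transitivity (\sum_s \sum_a occ_cond f p h.+1 s1 s a *
     (\sum_s' \sum_a' occ_cond f q h.+1 s1 s' a' * r s a s' a') +
   \sum_s \sum_a occ_cond f p h.+1 s1 s a * (\sum_s' \sum_a' occ_cond f q h.+1 s1 s' a' *
     \sum_x \sum_x' f s a x * f s' a' x' *
     \sum_b \sum_b' pi h.+2 x b * q h.+2 x' b' * Qf H f r pi q h.+2 x b x' b')).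
  rewrite -big_split; apply: eq_bigr => s _; rewrite -big_split; apply: eq_bigr => a _.
  rewrite /occ_cond /= -mulrDr; congr (_ * _); rewrite /Gq -big_split.
  apply: eq_bigr => s' _; rewrite -big_split; apply: eq_bigr => a' _.
  by rewrite Qf_rec // mulrDr.
congr (_ + _); rewrite swap_lemma; apply: eq_bigr => x _.
rewrite /Gq /occ_cond /=.
transitivity (\sum_x' \sum_b \sum_b' sdist f p s1 h.+1 x * pi h.+2 x b *
   (sdist f q s1 h.+1 x' * q h.+2 x' b' * Qf H f r pi q h.+2 x b x' b')).
  apply: eq_bigr => x' _; rewrite mulr_sumr; apply: eq_bigr => b _.
  rewrite mulr_sumr; apply: eq_bigr => b' _; rewrite /=; ring.
rewrite exchange_big; apply: eq_bigr => b _; rewrite mulr_sumr; apply: eq_bigr => x' _.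
by rewrite mulr_sumr.
Qed.

Lemma Aterm_end p w pi q : Aterm p w pi q H.+1 = 0.
Proof.
rewrite /Aterm big1 // => s1 _; rewrite big1 ?mulr0 // => s _; rewrite big1 // => a _.
rewrite /Gq big1 ?mulr0 // => s' _; rewrite big1 // => a' _; by rewrite Qf_end mulr0.
Qed.

Lemma tele p pi q : \sum_(1 <= h < H.+1) (Aterm p p pi q h - Aterm p pi pi q h) =
   \sum_(1 <= h < H.+1) Rw p q h - Aterm p pi pi q 1.
Proof.
transitivity (\sum_(1 <= h < H.+1) (Rw p q h + (Aterm p pi pi q h.+1 - Aterm p pi pi q h))).
  rewrite big_nat [RHS]big_nat; apply: eq_bigr => h /andP [h0 hH].
  by rewrite Aterm_step // addrA.
by rewrite big_split /= telescope_sumr // Aterm_end sub0r.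
Qed.

Lemma B1 p pi q : Aterm p pi pi q 1 = nuV H f nu1 r pi q.
Proof.
rewrite /Aterm /nuV; apply: eq_bigr => s1 _; congr (_ * _); rewrite /Vf /=.
transitivity (\sum_s (s == s1)%:R * \sum_a pi 1%N s a * Gq pi q 1 s1 s a).
  apply: eq_bigr => s _; rewrite mulr_sumr; apply: eq_bigr => a _; by rewrite mulrA.
rewrite sum_ind; apply: eq_bigr => a _; rewrite /Gq /occ_cond /=.
transitivity (pi 1%N s1 a * \sum_s' (s' == s1)%:R * \sum_a' q 1%N s' a' * Qf H f r pi q 1 s1 a s' a').
  congr (_ * _); apply: eq_bigr => s' _; rewrite mulr_sumr; apply: eq_bigr => a' _; by rewrite mulrA.
rewrite sum_ind mulr_sumr; apply: eq_bigr => a' _; by rewrite mulrA.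
Qed.

Lemma Vformula p q : nuV H f nu1 r p q = \sum_(1 <= h < H.+1) Rw p q h.
Proof.
have := tele p p q; rewrite big1 => [|h _]; last by rewrite subrr.
by rewrite B1 => /eqP; rewrite eq_sym subr_eq0 => /eqP.
Qed.

Lemma PD p pi q : nuV H f nu1 r p q - nuV H f nu1 r pi q =
  \sum_(1 <= h < H.+1) (Aterm p p pi q h - Aterm p pi pi q h).
Proof. by rewrite tele B1 Vformula. Qed.

Lemma Rw_sym p q h : is_policy H p -> is_policy H q -> (0 < h)%N -> (h <= H)%N ->
  Rw p q h + Rw q p h = 1.
Proof.
move=> Hp Hq h0 hH.
rewrite /Rw -big_split /= -nu_sum; apply: eq_bigr => s1 _.
rewrite -mulrDr -[RHS]mulr1; congr (_ * _).
rewrite [X in _ + X](@sum4_swap R _ _ _ _ (fun s' a' => occ_cond f q h s1 s' a') (fun s a => occ_cond f p h s1 s a)) -big_split /=.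
rewrite -(occc_sum p h s1 Hp h0 hH); apply: eq_bigr => s _; rewrite -big_split /=.
apply: eq_bigr => a _; rewrite -mulrDr -[RHS]mulr1; congr (_ * _).
rewrite -big_split -(occc_sum q h s1 Hq h0 hH); apply: eq_bigr => s' _; rewrite -big_split /=.
by apply: eq_bigr => a' _; rewrite -mulrDr r_anti mulr1.
Qed.

Lemma Rw_ge0 p q h : is_policy H p -> is_policy H q -> (0 < h)%N -> (h <= H)%N ->
  0 <= Rw p q h.
Proof.
move=> Hp Hq h0 hH; apply: sumr_ge0 => s1 _; rewrite mulr_ge0 ?nu_ge0 //.
apply: sumr_ge0 => s _; apply: sumr_ge0 => a _; rewrite mulr_ge0 ?occc_ge0 //.
apply: sumr_ge0 => s' _; apply: sumr_ge0 => a' _; rewrite mulr_ge0 ?occc_ge0 //.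
by case/andP: (r_bnd s a s' a').
Qed.

Lemma V_self p : is_policy H p -> nuV H f nu1 r p p = H%:R / 2.
Proof.
move=> Hp; rewrite Vformula.
rewrite big_nat (eq_bigr (fun _ => 1 / 2)) => [|h /andP [h0 hH]].
  by rewrite -big_nat sumr_const_nat subn1 /= mulr_natl -mulr_natr mul1r.
have := Rw_sym p p h Hp Hp h0 hH; lra.
Qed.

Lemma V_sum p q : is_policy H p -> is_policy H q ->
  nuV H f nu1 r p q + nuV H f nu1 r q p = H%:R.
Proof.
move=> Hp Hq; rewrite !Vformula -big_split /= big_nat (eq_bigr (fun _ => 1)) => [|h /andP [h0 hH]].
  by rewrite -big_nat sumr_const_nat subn1.
exact: Rw_sym.
Qed.

Lemma V_bnd p q : is_policy H p -> is_policy H q -> 0 <= nuV H f nu1 r p q <= H%:R.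
Proof.
move=> Hp Hq; have := V_sum p q Hp Hq.
have g1 : 0 <= nuV H f nu1 r p q.
  rewrite Vformula big_nat; apply: sumr_ge0 => h /andP [h0 hH]; exact: Rw_ge0.
have g2 : 0 <= nuV H f nu1 r q p.
  rewrite Vformula big_nat; apply: sumr_ge0 => h /andP [h0 hH]; exact: Rw_ge0.
move=> e; apply/andP; split; lra.
Qed.

Variable s1of : S -> S.
Hypothesis Huniq : unique_initial H f nu1 s1of.

Lemma step_policy (pi : policy R S A) (beta : R) (g : nat -> S -> A -> R) :
  is_policy H pi -> is_policy H (fun h s a =>
    pi h s a * expR (beta * g h s a) / \sum_b pi h s b * expR (beta * g h s b)).
Proof.
move=> Hp h hh s; case/andP: hh => h0 hH.
have t0 : forall b, 0 <= pi h s b * expR (beta * g h s b).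
  by move=> b; rewrite mulr_ge0 ?(pol_ge0 _ _ _ _ Hp) // ltW // expR_gt0.
have ge0 : 0 <= \sum_b pi h s b * expR (beta * g h s b) by apply: sumr_ge0.
have ne0 : \sum_b pi h s b * expR (beta * g h s b) != 0.
  apply/eqP => Z0; have := psumr_eq0P (fun b _ => t0 b) Z0 => all0.
  have : \sum_b pi h s b = 0.
    apply: big1 => b _; have := all0 b isT; move/eqP; rewrite mulf_eq0 => /orP [/eqP //|].
    by rewrite gt_eqF // expR_gt0.
  by rewrite (pol_sum _ _ _ Hp) // => /eqP; rewrite oner_eq0.
split => [a|]; first by rewrite divr_ge0.
by rewrite -mulr_suml divff.
Qed.

Lemma mpo_policy beta pi1 n : is_policy H pi1 -> is_policy H (mpo H f r s1of beta pi1 n).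
Proof.
move=> Hp; elim: n => [|n IH] //=.
exact: (step_policy (mpo H f r s1of beta pi1 n) beta (mpo_gain H f r s1of (mpo H f r s1of beta pi1 n)) IH).
Qed.

Lemma reach0 p h s1 s : is_policy H p -> (0 < h)%N -> (h <= H)%N -> 0 < nu1 s1 ->
  s1 != s1of s -> sdist f p s1 h.-1 s = 0.
Proof.
move=> Hp h0 hH n0 ne.
have ge : 0 <= sdist f p s1 h.-1 s by apply: sdist_ge0 => //; apply: leq_trans (leq_pred _) hH.
apply/eqP; rewrite eq_le ge andbT leNgt; apply/negP => gt.
case: (boolP [exists a, 0 < p h s a]) => [/existsP [a pa] | /existsPn all0].
  have e := (proj2 (Huniq s)) s1 n0.
  have : s1 = s1of s.
    apply: e; exists p; split => //; exists h; split; first by rewrite h0 hH.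
    by exists a; rewrite /occ_cond mulr_gt0.
  by move=> eq; rewrite eq eqxx in ne.
have : \sum_a p h s a = 0.
  apply: big1 => a _; apply/eqP; rewrite eq_le (pol_ge0 _ _ _ _ Hp) // andbT.
  by rewrite leNgt; exact: all0 a.
by rewrite (pol_sum _ _ _ Hp) // => /eqP; rewrite oner_eq0.
Qed.

Section Mix.
Variables (beta : R) (pi1 : policy R S A) (T : nat).
Hypothesis Hpi1 : is_policy H pi1.
Hypothesis HT : (0 < T)%N.

Definition pis t := mpo H f r s1of beta pi1 t.

Lemma pis_pol t : is_policy H (pis t).
Proof. exact: mpo_policy. Qed.

Definition wsum h s := \sum_(t < T) sdist f (pis t) (s1of s) h.-1 s.

Definition pibar : policy R S A := fun h s a =>
  if wsum h s == 0 then pi1 h s a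
  else (\sum_(t < T) sdist f (pis t) (s1of s) h.-1 s * pis t h s a) / wsum h s.

Lemma wsum_ge0 h s : (0 < h)%N -> (h <= H)%N -> 0 <= wsum h s.
Proof.
move=> h0 hH; apply: sumr_ge0 => t _; apply: sdist_ge0; first exact: pis_pol.
by apply: leq_trans (leq_pred _) hH.
Qed.

Lemma pibar_policy : is_policy H pibar.
Proof.
move=> h hh s; case/andP: hh => h0 hH; rewrite /pibar; case: eqP => [_|ne].
  by apply: Hpi1; rewrite h0 hH.
have hm : (h.-1 <= H)%N by apply: leq_trans (leq_pred _) hH.
split => [a|].
  rewrite divr_ge0 ?wsum_ge0 //; apply: sumr_ge0 => t _.
  apply: mulr_ge0; first by apply: sdist_ge0 => //; exact: pis_pol.
  exact: (pol_ge0 _ _ _ _ (pis_pol t)).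
rewrite -mulr_suml exchange_big /=.
under eq_bigr do rewrite -mulr_sumr (pol_sum _ _ _ (pis_pol _)) // mulr1.
by rewrite -/(wsum h s) divff //; apply/eqP.
Qed.

Lemma Kmix h s1 s a : (0 < h)%N -> (h <= H)%N -> 0 < nu1 s1 ->
  \sum_(t < T) sdist f (pis t) s1 h.-1 s * pibar h s a =
  \sum_(t < T) sdist f (pis t) s1 h.-1 s * pis t h s a.
Proof.
move=> h0 hH n0; have hm : (h.-1 <= H)%N by apply: leq_trans (leq_pred _) hH.
case: (eqVneq s1 (s1of s)) => [->|ne].
  rewrite -mulr_suml -/(wsum h s) /pibar; case: eqP => [w0|wn].
    rewrite w0 mul0r; symmetry; apply: big1 => t _.
    have := psumr_eq0P (fun (t : 'I_T) _ => sdist_ge0 (pis t) (s1of s) h.-1 s (pis_pol t) hm) w0 (i:=t) isT.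
    by move=> ->; rewrite mul0r.
  by rewrite mulrC divfK //; apply/eqP.
rewrite !big1 // => t _; by rewrite (reach0 (pis t) h s1 s (pis_pol t) h0 hH n0 ne) mul0r.
Qed.

Lemma sdist_bar n s1 x : (n <= H)%N -> 0 < nu1 s1 ->
  T%:R * sdist f pibar s1 n x = \sum_(t < T) sdist f (pis t) s1 n x.
Proof.
move=> + n0; elim: n x => [|n IH] x hn /=.
  by rewrite sumr_const card_ord mulr_natl.
rewrite mulr_sumr.
transitivity (\sum_s \sum_a \sum_(t < T) sdist f (pis t) s1 n s * pis t n.+1 s a * f s a x).
  apply: eq_bigr => s _; rewrite mulr_sumr; apply: eq_bigr => a _.
  rewrite !mulrA IH ?(ltnW hn) // mulr_suml (@Kmix n.+1 s1 s a) // mulr_suml.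
  done.
by rewrite [RHS]ex2.
Qed.

Lemma Tne0 : T%:R != 0 :> R.
Proof. by rewrite pnatr_eq0 -lt0n. Qed.

Lemma occc_bar h s1 s a : (0 < h)%N -> (h <= H)%N -> 0 < nu1 s1 ->
  occ_cond f pibar h s1 s a = T%:R^-1 * \sum_(t < T) occ_cond f (pis t) h s1 s a.
Proof.
move=> h0 hH n0; have hm : (h.-1 <= H)%N by apply: leq_trans (leq_pred _) hH.
rewrite /occ_cond.
have e : sdist f pibar s1 h.-1 s = T%:R^-1 * \sum_(t < T) sdist f (pis t) s1 h.-1 s.
  by rewrite -sdist_bar // mulKf // Tne0.
by rewrite e -mulrA mulr_suml Kmix.
Qed.

Lemma occ_bar h s a : (0 < h)%N -> (h <= H)%N ->
  occ f nu1 pibar h s a = T%:R^-1 * \sum_(t < T) occ f nu1 (pis t) h s a.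
Proof.
move=> h0 hH; rewrite /occ.
transitivity (\sum_s1 nu1 s1 * (T%:R^-1 * \sum_(t < T) occ_cond f (pis t) h s1 s a)).
  apply: eq_bigr => s1 _; have := nu_ge0 s1; rewrite le_eqVlt => /orP [/eqP <-|n0].
    by rewrite !mul0r.
  by rewrite occc_bar.
rewrite [in RHS]exchange_big [in RHS]mulr_sumr; apply: eq_bigr => s1 _.
by rewrite -mulr_sumr mulrCA.
Qed.

Lemma Rw_bar q h : (0 < h)%N -> (h <= H)%N ->
  Rw q pibar h = T%:R^-1 * \sum_(t < T) Rw q (pis t) h.
Proof.
move=> h0 hH; rewrite /Rw.
transitivity (\sum_s1 nu1 s1 * (T%:R^-1 * \sum_(t < T) \sum_s \sum_a occ_cond f q h s1 s a *
     \sum_s' \sum_a' occ_cond f (pis t) h s1 s' a' * r s a s' a')).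
  apply: eq_bigr => s1 _; have := nu_ge0 s1; rewrite le_eqVlt => /orP [/eqP <-|n0].
    by rewrite !mul0r.
  congr (_ * _).
  under eq_bigr => s _ do under eq_bigr => a _ do under eq_bigr => s' _ do
    under eq_bigr => a' _ do rewrite occc_bar //.
  exact: lin4.
rewrite [in RHS]exchange_big [in RHS]mulr_sumr; apply: eq_bigr => s1 _.
by rewrite -mulr_sumr mulrCA.
Qed.

Lemma V_bar q : nuV H f nu1 r q pibar = T%:R^-1 * \sum_(t < T) nuV H f nu1 r q (pis t).
Proof.
rewrite Vformula big_nat (eq_bigr (fun h => T%:R^-1 * \sum_(t < T) Rw q (pis t) h)).
  rewrite -big_nat -mulr_sumr exchange_big /=; congr (_ * _).
  by apply: eq_bigr => t _; rewrite Vformula.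
by move=> h /andP [h0 hH]; rewrite Rw_bar.
Qed.

Lemma gain_bnd t h s a : (0 < h)%N -> (h <= H)%N ->
  0 <= mpo_gain H f r s1of (pis t) h s a <= H%:R.
Proof.
move=> h0 hH; apply: avgw.
- by move=> s' a'; apply: occc_ge0 => //; exact: pis_pol.
- by apply: occc_sum => //; exact: pis_pol.
- by move=> s' a'; apply: Qf_bnd => //; exact: pis_pol.
Qed.

Lemma Dt_repl q t h : is_policy H q -> (0 < h)%N -> (h <= H)%N ->
  Aterm q q (pis t) (pis t) h - Aterm q (pis t) (pis t) (pis t) h =
  \sum_s1 nu1 s1 * (\sum_s sdist f q s1 h.-1 s *
     \sum_a (q h s a - pis t h s a) * mpo_gain H f r s1of (pis t) h s a).
Proof.
move=> Hq h0 hH; rewrite /Aterm -sumrB; apply: eq_bigr => s1 _; rewrite -mulrBr.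
have := nu_ge0 s1; rewrite le_eqVlt => /orP [/eqP <-|n0]; first by rewrite !mul0r.
congr (_ * _); rewrite -sumrB; apply: eq_bigr => s _; rewrite -sumrB.
case: (eqVneq s1 (s1of s)) => [->|ne].
  rewrite mulr_sumr; apply: eq_bigr => a _.
  by rewrite -mulrBl -mulrBr -mulrA.
rewrite (reach0 q h s1 s Hq h0 hH n0 ne) mul0r big1 // => a _; by rewrite !mul0r subrr.
Qed.


Lemma gap q : is_policy H q -> nuV H f nu1 r q pibar - H%:R / 2 =
  T%:R^-1 * \sum_(t < T) (nuV H f nu1 r q (pis t) - nuV H f nu1 r (pis t) (pis t)).
Proof.
move=> Hq; rewrite V_bar.
under [in RHS]eq_bigr do rewrite (V_self _ (pis_pol _)).
rewrite sumrB sumr_const card_ord mulrBr; congr (_ - _).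
have e : (H%:R / 2) *+ T = T%:R * (H%:R / 2) :> R by rewrite [RHS]mulr_natl.
by rewrite e mulKf ?Tne0.
Qed.

Lemma regret_total q (pimin : R) : is_policy H q -> 0 < beta -> beta * H%:R <= 1/2 ->
  0 < pimin -> (forall h, (1 <= h <= H)%N -> forall s a, pimin <= pi1 h s a) ->
  \sum_(t < T) (nuV H f nu1 r q (pis t) - nuV H f nu1 r (pis t) (pis t)) <=
  H%:R * (ln (pimin^-1) / beta + 2 * beta * T%:R * H%:R ^+ 2).
Proof.
move=> Hq b0 bH p0 Hmin.
set C := ln _ / beta + _.
under eq_bigr do rewrite PD.
rewrite exchange_big /=.
apply: (@le_trans _ _ (\sum_(1 <= h < H.+1) C)); last first.
  by rewrite sumr_const_nat subn1 /= mulr_natl.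
rewrite big_nat [X in _ <= X]big_nat; apply: ler_sum => h /andP [h0 hH]; rewrite ltnS in hH.
under eq_bigr do rewrite Dt_repl //.
rewrite lin3.
apply: (@le_trans _ _ (\sum_s1 nu1 s1 * (\sum_s sdist f q s1 h.-1 s * C))).
  apply: ler_sum => s1 _; apply: ler_wpM2l; first exact: nu_ge0.
  apply: ler_sum => s _; apply: ler_wpM2l.
    by apply: sdist_ge0 => //; apply: leq_trans (leq_pred _) hH.
  apply: (@mw_regret R A (fun t a => pis t h s a)
     (fun t a => mpo_gain H f r s1of (pis t) h s a) (fun a => q h s a) beta pimin H%:R T).
  - exact: b0.
  - exact: p0.
  - exact: ler0n.
  - exact: bH.
  - by move=> a; apply: Hmin; rewrite h0 hH.
  - exact: (pol_sum _ _ _ Hpi1).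
  - by move=> t a; apply: gain_bnd.
  - by [].
  - by move=> a; apply: (pol_ge0 _ _ _ _ Hq).
  - exact: (pol_sum _ _ _ Hq).
have hm : (h.-1 <= H)%N by apply: leq_trans (leq_pred _) hH.
under eq_bigr => s1 _ do rewrite -mulr_suml (sdist_sum q s1 h.-1 Hq hm) mul1r.
by rewrite -mulr_suml nu_sum mul1r.
Qed.

Lemma final_mix (pimin : R) : (0 < H)%N -> 0 < pimin ->
  (forall h, (1 <= h <= H)%N -> forall s a, pimin <= pi1 h s a) ->
  beta = Num.sqrt (ln (pimin^-1) / (T%:R * H%:R ^+ 2)) ->
  [/\ is_policy H pibar,
     (forall h, (1 <= h <= H)%N -> forall s a, occ f nu1 pibar h s a =
        T%:R^-1 * \sum_(1 <= t < T.+1) occ f nu1 (mpo H f r s1of beta pi1 t.-1) h s a) &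
     forall eps : R, 0 < eps -> T%:R = 16 * H%:R ^+ 4 * ln (pimin^-1) / eps ^+ 2 ->
       is_approx_NE H f nu1 r eps pibar].
Proof.
move=> H0 p0 Hmin Hbeta; split.
- exact: pibar_policy.
- move=> h /andP [h0 hH] s a; rewrite occ_bar //; congr (_ * _).
  by rewrite big_add1 /= big_mkord.
move=> eps e0 Teq.
have key : forall q, is_policy H q -> nuV H f nu1 r q pibar - H%:R / 2 <= eps.
  move=> q Hq; case: (lerP (H%:R / 2) eps) => [big|small].
    have := V_bnd q pibar Hq pibar_policy; case/andP => _ b; lra.
  set L := ln (pimin^-1) in Teq Hbeta *.
  have T1 : 1 <= T%:R :> R by rewrite ler1n.
  have Hp : 1 <= H%:R :> R by rewrite ler1n.
  have Lp : 0 < L.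
    rewrite ltNge; apply/negP => Lle.
    have : T%:R <= 0 :> R.
      rewrite Teq; apply: mulr_le0_ge0; last by rewrite invr_ge0 exprn_ge0 // ltW.
      apply: mulr_ge0_le0 => //; rewrite mulr_ge0 // exprn_ge0 //; lra.
    lra.
  have Bv : beta = eps / (4 * H%:R ^+ 3).
    rewrite Hbeta.
    have -> : L / (T%:R * H%:R ^+ 2) = (eps / (4 * H%:R ^+ 3)) ^+ 2.
      rewrite Teq; field.
      by apply/and3P; split; apply/negP => /eqP; lra.
    by rewrite sqrtr_sqr ger0_norm // divr_ge0 ?mulr_ge0 ?exprn_ge0 //; lra.
  have b0 : 0 < beta by rewrite Bv divr_gt0 // mulr_gt0 // exprn_gt0 //; lra.
  have bH : beta * H%:R <= 1 / 2.
    have -> : beta * H%:R = eps / (4 * H%:R ^+ 2).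
      by rewrite Bv; field; apply/negP => /eqP; lra.
    rewrite ler_pdivrMr ?mulr_gt0 ?exprn_gt0 //; try lra.
    have : H%:R <= H%:R ^+ 2 :> R by rewrite expr2 ler_peMr //; lra.
    lra.
  rewrite gap //.
  apply: le_trans (ler_wpM2l _ (regret_total q pimin Hq b0 bH p0 Hmin)) _.
    by rewrite invr_ge0 ler0n.
  have -> : T%:R^-1 * (H%:R * (L / beta + 2 * beta * T%:R * H%:R ^+ 2)) = 3 / 4 * eps.
    rewrite Bv Teq; field.
    by apply/and3P; split; apply/negP => /eqP; lra.
  lra.
split => q Hq; have k := key q Hq;
  have := V_sum pibar q pibar_policy Hq; have := V_self pibar pibar_policy; lra.
Qed.
End Mix.
End MDPsec.

Theorem theorem5 (R : realType) (S A : finType) (H : nat)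
    (f : S -> A -> S -> R) (nu1 : S -> R) (r : S -> A -> S -> A -> R)
    (s1of : S -> S) (pi1 : policy R S A) (pimin : R) :
  (0 < H)%N ->
  is_mdp f nu1 r ->
  unique_initial H f nu1 s1of ->
  is_policy H pi1 ->
  0 < pimin ->
  (forall h, (1 <= h <= H)%N -> forall s a, pimin <= pi1 h s a) ->
  forall T : nat, (1 <= T)%N ->
  let beta := Num.sqrt (ln (pimin^-1) / (T%:R * H%:R ^+ 2)) in
  let pit := fun t : nat => mpo H f r s1of beta pi1 t.-1 in
  exists pibar : policy R S A,
    [/\ is_policy H pibar,
        (forall h, (1 <= h <= H)%N -> forall s a,
           occ f nu1 pibar h s a = T%:R^-1 * \sum_(1 <= t < T.+1) occ f nu1 (pit t) h s a) &
        forall eps : R, 0 < eps ->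
          T%:R = 16 * H%:R ^+ 4 * ln (pimin^-1) / eps ^+ 2 ->
          is_approx_NE H f nu1 r eps pibar].
Proof.
move=> H0 Hmdp Hu Hpi1 p0 Hmin T T1 beta pit.
exists (pibar R S A H f r s1of beta pi1 T).
exact: (@final_mix R S A H f nu1 r Hmdp s1of Hu beta pi1 T Hpi1 T1 pimin H0 p0 Hmin (erefl _)).
Qed.
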